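(* Let $n\ge2$ and let $Q=K(n,n)$ be the complete bipartite quiver with $n$ sources and $n$ sinks and exactly one arrow from each source to each sink. Suppose $m_1+\dots+m_k=q_1+\dots+q_k$ for some $k\ge4$, where all $m_i,q_j$ are (characteristic vectors in $\mathbb{Z}^{Q_1}$ of) perfect matchings of $Q$. Suppose moreover that for some $0\le l\le n-2$ there is a near perfect matching $p$ with $p\le m_1+m_2$ such that $p$ contains $l$ arrows of $q_1$. Then there exist $j\ge3$, perfect matchings $m'_1,m'_2,m'_j$ and a near perfect matching $p'$ such that $m_1+m_2+m_j=m'_1+m'_2+m'_j$, $p'\le m'_1+m'_2$, and $p'$ contains $l+1$ arrows of $q_1$.
   Context: A perfect matching of $K(n,n)$ is a set of $n$ arrows covering each vertex exactly once; a near perfect matching is a set of $n-1$ pairwise disjoint arrows (covering all vertices except one source and one sink). Matchings are identified with their characteristic vectors in $\mathbb{Z}_{\ge0}^{Q_1}$, and $\le$ denotes the componentwise partial order on $\mathbb{Z}^{Q_1}$. *)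

(* Defs.v *)
From mathcomp Require Import all_boot.
Set Implicit Arguments. Unset Strict Implicit. Unset Printing Implicit Defensive.

(* The complete bipartite quiver K(n,n): sources and sinks are both 'I_n,
   and the arrow set Q_1 is 'I_n * 'I_n, the arrow (i,j) going from
   source i to sink j. *)
Definition arrow (n : nat) := ('I_n * 'I_n)%type.

Definition chi (n : nat) (M : {set arrow n}) (a : arrow n) : nat := (a \in M).

Definition perfect_matching (n : nat) (M : {set arrow n}) : Prop :=
  (forall i : 'I_n, #|[set a in M | a.1 == i]| = 1) /\
  (forall j : 'I_n, #|[set a in M | a.2 == j]| = 1).

Definition near_perfect_matching (n : nat) (P : {set arrow n}) : Prop :=
  #|P| = n.-1 /\
  (forall a b, a \in P -> b \in P -> a != b -> (a.1 != b.1) && (a.2 != b.2)).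

(* Main.v *)
Require Import Defs.
From mathcomp Require Import all_boot zify.
Set Implicit Arguments. Unset Strict Implicit. Unset Printing Implicit Defensive.

Section Hall.
Variables (X Y : finType) (E : X -> Y -> bool) (y0 : Y).
Definition NB (S : {set X}) (B : {set Y}) := [set y in B | [exists x in S, E x y]].

Definition hall_concl (A : {set X}) (B : {set Y}) :=
  exists f : X -> Y, {in A &, injective f} /\
     forall x, x \in A -> (f x \in B) && E x (f x).

Lemma hall_aux m : forall (A : {set X}) (B : {set Y}), #|A| <= m ->
  (forall S : {set X}, S \subset A -> #|S| <= #|NB S B|) -> hall_concl A B.
Proof.
elim: m => [|m IH] A B HA HH.
  have A0 : A = set0 by apply: cards0_eq; lia.
  exists (fun _ => y0); split; first by move=> x y; rewrite A0 in_set0.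
  by move=> x; rewrite A0 in_set0.
have [A0|[x0 x0A]] := set_0Vmem A.
  exists (fun _ => y0); split; first by move=> x y; rewrite A0 in_set0.
  by move=> x; rewrite A0 in_set0.
case: (boolP [exists S0 : {set X}, [&& S0 \subset A, S0 != set0, S0 != A &
                                      #|NB S0 B| <= #|S0|]]).
- case/existsP=> S0 /and4P [S0A S0n S0A' HS0].
  have ltS0 : #|S0| < #|A| by apply: proper_card; rewrite properEneq S0A' S0A.
  have [f1 [f1i f1p]] : hall_concl S0 B.
    apply: IH; first by lia.
    by move=> S SS0; apply: HH; apply: subset_trans SS0 S0A.
  set N0 := NB S0 B.
  have [f2 [f2i f2p]] : hall_concl (A :\: S0) (B :\: N0).
    apply: IH.
      rewrite cardsDS //; have : 0 < #|S0| by rewrite card_gt0. lia.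
    move=> S SA.
    have dis : S :&: S0 = set0.
      apply/setP=> x; rewrite !inE.
      by apply/andP=> -[/(subsetP SA)]; rewrite !inE => /andP[/negPf->].
    have := HH (S :|: S0); rewrite subUset S0A (subset_trans SA) ?subsetDl //.
    move=> /(_ isT); rewrite cardsU dis cards0 subn0 => H1.
    have : #|NB (S :|: S0) B| <= #|NB S (B :\: N0) :|: N0|.
      apply: subset_leq_card; apply/subsetP=> y; rewrite [y \in NB _ _]inE.
      case/andP=> yB /existsP[x /andP[]].
      rewrite inE => /orP[xS|xS0] Exy; rewrite in_setU.
        case yN0: (y \in N0); first by rewrite orbT.
        rewrite /NB inE in_setD yN0 yB /= orbF; apply/existsP; exists x; by rewrite xS Exy.
      apply/orP; right; rewrite /N0 /NB inE yB; apply/existsP; exists x; by rewrite xS0.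
    have := cardsU (NB S (B :\: N0)) N0; rewrite /N0. lia.
  exists (fun x => if x \in S0 then f1 x else f2 x); split.
    move=> x y xA yA /=.
    case xS: (x \in S0); case yS: (y \in S0).
    + by apply: f1i; rewrite ?xS ?yS.
    + move=> e; have := f2p y; rewrite !in_setD yS yA => /(_ isT) /andP[/andP[yN _] _]; have /andP[fB fE] := f1p x xS.
      move: yN; rewrite -e /N0 /NB inE fB /= => /negP H; exfalso; apply: H.
      by apply/existsP; exists x; rewrite xS fE.
    + move=> e; have := f2p x; rewrite !in_setD xS xA => /(_ isT) /andP[/andP[yN _] _]; have /andP[fB fE] := f1p y yS.
      move: yN; rewrite e /N0 /NB inE fB /= => /negP H; exfalso; apply: H.
      by apply/existsP; exists y; rewrite yS fE.
    + by apply: f2i; rewrite !inE ?xS ?yS.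
  move=> x xA; case xS: (x \in S0); first by apply: f1p.
  by have := f2p x; rewrite !in_setD xS xA => /(_ isT) /andP[/andP[_ ->] ->].
- move=> Hno.
  have : 1 <= #|NB [set x0] B|.
    by have := HH [set x0]; rewrite sub1set x0A cards1 => /(_ isT).
  case/card_gt0P=> y1; rewrite inE => /andP[y1B /existsP[xx]].
  rewrite inE => /andP[/eqP-> Ex0]; clear xx.
  have [f [fi fp]] : hall_concl (A :\ x0) (B :\ y1).
    apply: IH; first by have := cardsD1 x0 A; rewrite x0A; lia.
    move=> S SA.
    have [->|Sn] := eqVneq S set0; first by rewrite cards0.
    have SA' : S \subset A by apply: subset_trans SA (subsetDl _ _).
    have SnA : S != A.
      apply/eqP=> e; move: SA; rewrite e => /subsetP/(_ x0 x0A).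
      by rewrite !inE eqxx.
    have Hs : #|S| < #|NB S B|.
      rewrite ltnNge; apply/negP=> Hle; move/negP: Hno; apply; apply/existsP.
      by exists S; rewrite SA' Sn SnA Hle.
    have : #|NB S B| <= #|NB S (B :\ y1) :|: [set y1]|.
      apply: subset_leq_card; apply/subsetP=> y; rewrite !inE.
      case/andP=> yB ->; case: (y == y1); by rewrite ?orbT ?yB.
    have := cardsU (NB S (B :\ y1)) [set y1]; rewrite cards1. lia.
  exists (fun x => if x == x0 then y1 else f x); split.
    move=> x y xA yA /=.
    case: (eqVneq x x0) => [->|xn]; case: (eqVneq y x0) => [->|yn] //.
    + move=> e; have := fp y; rewrite !inE yn yA => /(_ isT).
      by rewrite -e eqxx.
    + move=> e; have := fp x; rewrite !inE xn xA => /(_ isT).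
      by rewrite e eqxx.
    + by apply: fi; rewrite !inE ?xn ?yn.
  move=> x xA; case: (eqVneq x x0) => [->|xn]; first by rewrite y1B Ex0.
  have := fp x; rewrite !inE xn xA => /(_ isT) /andP[/andP[_ ->] ->]. by [].
Qed.
End Hall.
Set Implicit Arguments. Unset Strict Implicit. Unset Printing Implicit Defensive.

Section M.
Variable n : nat.
Implicit Types (M P : {set arrow n}) (w : arrow n -> nat) (f : arrow n -> 'I_n).

Definition line f w (i : 'I_n) := \sum_(a | f a == i) w a.

Lemma line_chi f M i : line f (chi M) i = #|[set a in M | f a == i]|.
Proof.
rewrite /line -sum1_card big_mkcond [RHS]big_mkcond; apply: eq_bigr=> a _.
by rewrite /chi !inE; case: (f a == i); case: (a \in M).
Qed.

Lemma pm_line M i : perfect_matching M ->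
  line fst (chi M) i = 1 /\ line snd (chi M) i = 1.
Proof. by case=> H1 H2; rewrite !line_chi H1 H2. Qed.

Lemma le1_line f M i : (forall a b, a \in M -> b \in M -> a != b -> f a != f b) ->
  line f (chi M) i <= 1.
Proof.
move=> H; rewrite line_chi; apply/card_le1_eqP => x y.
rewrite !inE => /andP[xP /eqP fx] /andP[yP /eqP fy]; apply/eqP.
apply: contraT => xy; have := H _ _ yP xP xy; by rewrite fx fy eqxx.
Qed.

Lemma npm_line1 P i : near_perfect_matching P -> line fst (chi P) i <= 1.
Proof. case=> _ H; apply: le1_line => a b aP bP ab; by case/andP: (H a b aP bP ab). Qed.
Lemma npm_line2 P i : near_perfect_matching P -> line snd (chi P) i <= 1.
Proof. case=> _ H; apply: le1_line => a b aP bP ab; by case/andP: (H a b aP bP ab). Qed.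

Lemma sum_line f w : \sum_i line f w i = \sum_a w a.
Proof. by rewrite (partition_big f predT) //=. Qed.

Lemma sum_chi M : \sum_a chi M a = #|M|.
Proof.
rewrite -sum1_card [RHS]big_mkcond; apply: eq_bigr => a _; by rewrite /chi; case: (a \in M).
Qed.

Lemma entry_le f w a : w a <= line f w (f a).
Proof. by rewrite /line (bigD1 a) //= leq_addr. Qed.

Lemma sum_line_in f w (S : {set 'I_n}) :
  \sum_(i in S) line f w i = \sum_(a | f a \in S) w a.
Proof.
rewrite (partition_big f (mem S)) //=; apply: eq_bigr => j jS.
apply: eq_bigl => a; rewrite andbC; case: eqP => [->|] //=; by rewrite jS.
Qed.

Lemma hall_pm w c : 0 < n -> 0 < c -> (forall i, c <= line fst w i) ->
  (forall N : {set 'I_n}, \sum_(j in N) line snd w j < c * #|N| + c) ->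
  exists M, perfect_matching M /\ forall a, chi M a <= w a.
Proof.
move=> n0 c0 Hr Hc.
pose y0 : 'I_n := Ordinal n0.
pose E := fun i j => 0 < w (i,j).
have HH : forall S : {set 'I_n}, S \subset setT -> #|S| <= #|NB E S setT|.
  move=> S _; set N := NB E S setT.
  have H1 : c * #|S| <= \sum_(j in N) line snd w j.
    rewrite mulnC -sum_nat_const.
    apply: (@leq_trans (\sum_(i in S) line fst w i)); first by apply: leq_sum => i _; exact: Hr.
    rewrite !sum_line_in big_mkcond [X in _ <= X]big_mkcond /=.
    apply: leq_sum => -[x y] _ /=.
    case xS: (x \in S) => //; case: (ltnP 0 (w (x,y))) => wp.
      have -> : y \in N by rewrite /N /NB !inE; apply/existsP; exists x; rewrite xS.
      by [].
    by move: wp; rewrite leqn0 => /eqP ->.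
  have := Hc N => H2.
  have : c * #|S| < c * #|N|.+1 by rewrite mulnS addnC; exact: leq_ltn_trans H1 H2.
  by rewrite ltn_pmul2l.
have [f [fi fp]] := @hall_aux _ _ E y0 #|[set: 'I_n]| setT setT (leqnn _) HH.
have finj : injective f by move=> x y e; apply: fi; rewrite ?inE.
exists [set a | f a.1 == a.2]; split; first split.
- move=> i; apply/eqP/cards1P; exists (i, f i); apply/setP => -[x y].
  rewrite !inE xpair_eqE /=.
  apply/andP/andP => -[/eqP e1 /eqP e2]; first by rewrite -e1 e2 !eqxx.
  by rewrite e1 e2 !eqxx.
- move=> j; apply/eqP/cards1P; exists (invF finj j, j); apply/setP => -[x y].
  rewrite !inE xpair_eqE /=.
  apply/andP/andP => -[/eqP e1 /eqP e2].
    split; last by apply/eqP. apply/eqP; have := @finj x (invF finj j); apply; by rewrite f_invF e1 e2.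
  by rewrite e1 e2 f_invF; split.
- move=> [x y]; rewrite /chi inE /=; case: eqP => //= <-.
  by have := fp x; rewrite !inE => /(_ isT).
Qed.


Lemma line3 f A B C i : line f (fun a => chi A a + chi B a + chi C a) i =
  line f (chi A) i + line f (chi B) i + line f (chi C) i.
Proof. by rewrite /line !big_split. Qed.

Lemma lineB f w1 w2 i : (forall a, w2 a <= w1 a) ->
  line f (fun a => w1 a - w2 a) i = line f w1 i - line f w2 i.
Proof. by move=> H; rewrite /line sumnB. Qed.

Lemma col_exact w c : 0 < c -> (forall j, line snd w j = c) ->
  forall N : {set 'I_n}, \sum_(j in N) line snd w j < c * #|N| + c.
Proof.
move=> c0 H N; rewrite (eq_bigr (fun _ => c)) // sum_nat_const mulnC.
by rewrite -{1}(addn0 (c * #|N|)) ltn_add2l.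
Qed.

Lemma decomp A B C P : 0 < n -> perfect_matching A -> perfect_matching B ->
  perfect_matching C -> near_perfect_matching P ->
  (forall a, chi P a <= chi A a + chi B a + chi C a) ->
  exists A' B' C', perfect_matching A' /\ perfect_matching B' /\
    perfect_matching C' /\
    (forall a, chi A a + chi B a + chi C a = chi A' a + chi B' a + chi C' a) /\
    (forall a, chi P a <= chi A' a + chi B' a).
Proof.
move=> n0 hA hB hC hP hPT.
pose T := fun a => chi A a + chi B a + chi C a.
have lT1 i : line fst T i = 3.
  rewrite /T line3; have [-> _] := pm_line i hA; have [-> _] := pm_line i hB.
  by have [-> _] := pm_line i hC.
have lT2 i : line snd T i = 3.
  rewrite /T line3; have [_ ->] := pm_line i hA; have [_ ->] := pm_line i hB.
  by have [_ ->] := pm_line i hC.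
pose w1 := fun a => T a - chi P a.
have [C' [hC' C'w]] : exists M, perfect_matching M /\ forall a, chi M a <= w1 a.
  apply: (@hall_pm w1 2 n0) => //.
    move=> i; rewrite /w1 lineB // lT1; have := npm_line1 i hP; lia.
  move=> N; rewrite (eq_bigr (fun j => 3 - line snd (chi P) j)); last first.
    by move=> j _; rewrite /w1 lineB // lT2.
  rewrite sumnB; last by move=> j _; have := npm_line2 j hP; lia.
  rewrite sum_nat_const.
  have htot : \sum_j line snd (chi P) j = n.-1.
    by rewrite sum_line sum_chi; case: hP.
  rewrite (bigID (mem N)) /= in htot.
  have h1 : \sum_(i < n | i \notin N) line snd (chi P) i <= \sum_(i < n | i \notin N) 1.
    by apply: leq_sum => j _; apply: npm_line2.
  have h2 : \sum_(j < n) 1 = n by rewrite sum1_card card_ord.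
  rewrite (bigID (mem N)) /= sum1_card in h2.
  move: htot h1 h2.
  set X := \sum_(i in N) _; set Y := \sum_(i < n | _) line _ _ _; set Z := \sum_(i < n | _) 1.
  clearbody X Y Z; set K := #|N|; clearbody K; lia.
have C'T a : chi C' a <= T a by apply: leq_trans (C'w a) (leq_subr _ _).
pose w2 := fun a => T a - chi C' a.
have [A' [hA' A'w]] : exists M, perfect_matching M /\ forall a, chi M a <= w2 a.
  apply: (@hall_pm w2 2 n0) => //.
    by move=> i; rewrite /w2 lineB // lT1; have [-> _] := pm_line i hC'.
  apply: col_exact => // j; rewrite /w2 lineB // lT2.
  by have [_ ->] := pm_line j hC'.
pose w3 := fun a => w2 a - chi A' a.
have [B' [hB' B'w]] : exists M, perfect_matching M /\ forall a, chi M a <= w3 a.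
  apply: (@hall_pm w3 1 n0) => //.
    move=> i; rewrite /w3 lineB // /w2 lineB // lT1.
    by have [-> _] := pm_line i hC'; have [-> _] := pm_line i hA'.
  apply: col_exact => // j; rewrite /w3 lineB // /w2 lineB // lT2.
  by have [_ ->] := pm_line j hC'; have [_ ->] := pm_line j hA'.
have h0 a : w3 a - chi B' a = 0.
  apply/eqP; rewrite -leqn0.
  apply: leq_trans (entry_le fst (fun a => w3 a - chi B' a) a) _.
  rewrite lineB // /w3 lineB // /w2 lineB // lT1.
  have [-> _] := pm_line a.1 hC'; have [-> _] := pm_line a.1 hA'.
  by have [-> _] := pm_line a.1 hB'.
exists A', B', C'; do 3 split => //; split.
  move=> a; have := h0 a; have := B'w a; have := A'w a; have := C'w a.
  rewrite /w3 /w2 /w1 /T; lia.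
move=> a; have := hPT a; have := h0 a; have := B'w a; have := A'w a; have := C'w a.
rewrite /w3 /w2 /w1 /T; lia.
Qed.

End M.

Lemma card1_eq (T : finType) (A : {set T}) x y : #|A| = 1 -> x \in A -> y \in A -> x = y.
Proof. by move/eqP/cards1P=> [z ->]; rewrite !inE => /eqP-> /eqP->. Qed.

Theorem lemma9p2 (n k l : nat) (m q : nat -> {set arrow n}) (p : {set arrow n}) :
  2 <= n -> 4 <= k ->
  (forall i, 1 <= i <= k -> perfect_matching (m i)) ->
  (forall i, 1 <= i <= k -> perfect_matching (q i)) ->
  (forall a, \sum_(1 <= i < k.+1) chi (m i) a = \sum_(1 <= i < k.+1) chi (q i) a) ->
  l <= n - 2 ->
  near_perfect_matching p ->
  (forall a, chi p a <= chi (m 1) a + chi (m 2) a) ->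
  #|p :&: q 1| = l ->
  exists j : nat, exists m1' m2' mj' p' : {set arrow n},
    3 <= j <= k /\
    perfect_matching m1' /\ perfect_matching m2' /\ perfect_matching mj' /\
    near_perfect_matching p' /\
    (forall a, chi (m 1) a + chi (m 2) a + chi (m j) a
               = chi m1' a + chi m2' a + chi mj' a) /\
    (forall a, chi p' a <= chi m1' a + chi m2' a) /\
    #|p' :&: q 1| = l.+1.
Proof.
move=> n2 k4 Hm Hq Hsum hl hp hpm hpq.
have n0 : 0 < n by lia.
have [s hs] : exists s : 'I_n, line fst (chi p) s = 0.
  case: (boolP [exists s, line fst (chi p) s == 0]) => [/existsP[s /eqP hs]|/existsPn H].
    by exists s.
  exfalso.
  have h1 : \sum_(i : 'I_n) 1 <= \sum_i line fst (chi p) i.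
    by apply: leq_sum => i _; rewrite lt0n H.
  move: h1; rewrite sum1_card card_ord sum_line sum_chi; case: hp => -> _; lia.
have s_notin x : x \in p -> x.1 != s.
  move=> xp; apply/eqP => xs; have := entry_le fst (chi p) x.
  by rewrite /= xs hs /chi xp.
have [hq1r hq1c] : perfect_matching (q 1) by apply: Hq; lia.
have [a ha] : exists a, [set x in q 1 | x.1 == s] = [set a].
  by apply/cards1P; rewrite hq1r.
have : a \in [set a] by rewrite set11.
rewrite -ha inE => /andP[aq /eqP a1].
have q1col x : x \in q 1 -> x.2 = a.2 -> x = a.
  move=> xq xu; apply: (card1_eq (hq1c a.2)); by rewrite inE ?xq ?xu ?aq eqxx.
have ap : a \notin p by apply/negP => /s_notin; rewrite a1 eqxx.
have [b [bp bq bu]] : exists b, [/\ b \in p, b \notin q 1 &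
                                  forall x, x \in p -> x.2 = a.2 -> x = b].
  case: (pickP [pred x | (x \in p) && (x.2 == a.2)]) => [x /andP[xp /eqP xu] | none].
    exists x; split => //.
      apply/negP => xq; have xa := q1col x xq xu.
      by move: (s_notin x xp); rewrite xa a1 eqxx.
    move=> y yp yu; apply/eqP; apply: contraT => yx.
    by have := hp.2 y x yp xp yx; rewrite yu xu eqxx andbF.
  have : 0 < #|p :\: q 1|.
    have := cardsID (q 1) p; case: hp => hpc _; rewrite hpc hpq; lia.
  case/card_gt0P => c; rewrite inE => /andP[cq cp].
  exists c; split => // x xp xu; have := none x; by rewrite /= xp xu eqxx.
pose p' := a |: (p :\ b).
have hp' : near_perfect_matching p'.
  split.
    rewrite cardsU1 in_setD1 (negbTE ap) andbF /=.
    have := cardsD1 b p; rewrite bp /=; case: hp => -> _; lia.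
  move=> x y; rewrite !inE => hx hy xy.
  case/orP: hx => [/eqP xa|/andP[xb xp]]; case/orP: hy => [/eqP ya|/andP[yb yp]].
  - by move: xy; rewrite xa ya eqxx.
  - rewrite xa a1 eq_sym (s_notin y yp) /=.
    by apply/eqP => e; move/eqP: yb; apply; apply: bu.
  - rewrite ya a1 (s_notin x xp) /=.
    by apply/eqP => e; move/eqP: xb; apply; apply: bu.
  - exact: hp.2.
have hcard : #|p' :&: q 1| = l.+1.
  have -> : p' :&: q 1 = a |: (p :&: q 1).
    apply/setP => x; rewrite !inE.
    case: (eqVneq x a) => [->|xa] /=; first by rewrite aq.
    case: (eqVneq x b) => [->|xb] /=; last by [].
    by rewrite (negbTE bq) andbF.
  by rewrite cardsU1 inE (negbTE ap) /= hpq.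
have hp'le x : chi p' x <= chi p x + (x == a).
  by rewrite /chi !inE; case: (x == a); case: (x == b); case: (x \in p).
have [i0 [hi0 ai0]] : exists i, 1 <= i <= k /\ a \in m i.
  case: (boolP [exists i : 'I_k.+1, (0 < i) && (a \in m i)])
     => [/existsP[i /andP[i1 ai]] | /existsPn H].
    exists i; split => //; have := ltn_ord i; lia.
  exfalso.
  have h1 : \sum_(1 <= i < k.+1) chi (m i) a = 0.
    rewrite big_nat_cond; apply: big1 => i /andP[/andP[i1 ik] _].
    have := H (Ordinal ik); rewrite /= i1 /= /chi => /negbTE -> //.
  have h2 : 1 <= \sum_(1 <= i < k.+1) chi (q i) a.
    rewrite big_ltn; last by lia.
    by rewrite /chi aq.
  have := Hsum a; lia.
pose j := if 3 <= i0 then i0 else 3.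
have hj : 3 <= j <= k by rewrite /j; case: ifP; lia.
have hp'T x : chi p' x <= chi (m 1) x + chi (m 2) x + chi (m j) x.
  have := hp'le x; have := hpm x.
  case: (eqVneq x a) => [->|xa] /=.
    have hm : chi (m i0) a = 1 by rewrite /chi ai0.
    have : i0 = 1 \/ i0 = 2 \/ i0 = j by rewrite /j; case: ifP; lia.
    have hpa : chi p a = 0 by rewrite /chi (negbTE ap).
    case=> [e|[e|e]]; rewrite e in hm; lia.
  lia.
have hm1 : perfect_matching (m 1) by apply: Hm; lia.
have hm2 : perfect_matching (m 2) by apply: Hm; lia.
have hmj : perfect_matching (m j) by apply: Hm; lia.
have [A' [B' [C' [hA' [hB' [hC' [heq hle]]]]]]] := decomp n0 hm1 hm2 hmj hp' hp'T.
exists j, A', B', C', p'.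
by do 7 (split => //).
Qed.
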